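(* Let $G=(V,E)$ be a finite connected graph with boundary $\partial G\subset V$, and let $\alpha\in\Pi(\partial G)$ be a boundary condition. Assume that the graph $G\cup\alpha$ is not a tree and contains at least two vertices. Then for all $p\in(0,1)$ and all $q\in(0,\infty)$ with $q\neq 1$, there exist families $(\varepsilon_e)_{e\in E}\in[0,1]^E$ and $(\varepsilon'_e)_{e\in E}\in[0,1]^E$, neither of which is identically $0$, such that \[\mathbb P^G_{(\min(p,p')+\varepsilon_e)_{e}}\ \preceq\ \phi^\alpha_{G,p,q}\ \preceq\ \mathbb P^G_{(\max(p,p')-\varepsilon'_e)_{e}}.\]
   Context: Configurations are $\omega\in\{0,1\}^E$; an edge $e$ is open if $\omega(e)=1$, closed otherwise; configurations are partially ordered coordinatewise. $\Pi(\partial G)$ denotes the set of partitions of $\partial G$; vertices in the same block of $\alpha$ are called wired. $G\cup\alpha$ is the (multi)graph obtained from $G$ by identifying wired vertices (this may create self-loops). $k(\omega,\alpha)$ is the number of connected components of the graph with vertex set $V$ and edge set the open edges of $\omega$, after identifying wired vertices. For $p\in[0,1]$, $q>0$, the FK (random cluster) measure is \[\phi^\alpha_{G,p,q}(\omega)=\frac1{Z}\Big(\prod_{e\in E}p^{\omega(e)}(1-p)^{1-\omega(e)}\Big)q^{k(\omega,\alpha)},\] $Z$ the normalizing constant. Set $p':=\frac{p}{p+q(1-p)}$. For $(p_e)_{e\in E}\in[0,1]^E$, $\mathbb P^G_{(p_e)}$ is the product measure on $\{0,1\}^E$ under which each edge $e$ is open independently with probability $p_e$. For measures $\mu,\mu'$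 on $\{0,1\}^E$, $\mu\preceq\mu'$ means $\mu(A)\le\mu'(A)$ for every increasing event $A$ (an event preserved by opening edges). *)

(* Defs.v *)
From HB Require Import structures.
From mathcomp Require Import all_boot all_order all_algebra.
From mathcomp Require Import reals.
Set Implicit Arguments. Unset Strict Implicit. Unset Printing Implicit Defensive.
Import Order.TTheory GRing.Theory Num.Theory.
Local Open Scope ring_scope.

Section FK.
Variables (V E : finType) (src dst : E -> V).

Definition config := {ffun E -> bool}.

Definition adjF (F : pred E) : rel V := fun x y =>
  [exists e, F e && (((src e == x) && (dst e == y)) || ((src e == y) && (dst e == x)))].

Definition connected_graph : Prop := forall x y : V, connect (adjF predT) x y.

(* wired vertices for a boundary condition alpha (a partition of the boundary B) *)
Definition wired (B : {set V}) (alpha : {set {set V}}) : rel V := fun x y =>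
  [&& x \in B, y \in B & pblock alpha x == pblock alpha y].

Definition clrel (B : {set V}) (alpha : {set {set V}}) (omega : config) : rel V :=
  fun x y => adjF (fun e => omega e) x y || wired B alpha x y.

Definition kcl (B : {set V}) (alpha : {set {set V}}) (omega : config) : nat :=
  #|[set [set y | connect (clrel B alpha omega) x y] | x : V]|.

(* G cup alpha: its vertices are the classes of V under wiring; its edges are E *)
Definition all_open : config := [ffun => true].
Definition all_closed : config := [ffun => false].
Definition remove_edge (e : E) : config := [ffun f => f != e].

Definition nb_vertices_Galpha B alpha : nat := kcl B alpha all_closed.
Definition connected_Galpha B alpha : Prop := kcl B alpha all_open = 1%N.
(* a tree = a connected (multi)graph which becomes disconnected after
   removing any edge (minimally connected); self-loops / parallel edges
   are thereby excluded *)
Definition is_tree_Galpha B alpha : Prop :=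
  connected_Galpha B alpha /\ forall e : E, kcl B alpha (remove_edge e) <> 1%N.

Variable R : realType.

Definition edge_weight (p : R) (b : bool) : R := if b then p else 1 - p.

Definition fk_weight B alpha (p q : R) (omega : config) : R :=
  (\prod_(e : E) edge_weight p (omega e)) * q ^+ kcl B alpha omega.

Definition fk_Z B alpha (p q : R) : R := \sum_(omega : config) fk_weight B alpha p q omega.

Definition fk_measure B alpha (p q : R) (A : {set config}) : R :=
  (\sum_(omega in A) fk_weight B alpha p q omega) / fk_Z B alpha p q.

Definition prod_measure (pe : E -> R) (A : {set config}) : R :=
  \sum_(omega in A) \prod_(e : E) edge_weight (pe e) (omega e).

Definition config_le (w w' : config) : bool := [forall e, w e ==> w' e].

Definition increasing (A : {set config}) : Prop :=
  forall w w' : config, w \in A -> config_le w w' -> w' \in A.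

Definition st_dom (mu nu : {set config} -> R) : Prop :=
  forall A : {set config}, increasing A -> mu A <= nu A.

Definition pprime (p q : R) : R := p / (p + q * (1 - p)).

End FK.

(* Main.v *)
Require Import Defs.
From HB Require Import structures.
From mathcomp Require Import all_boot all_order all_algebra.
From mathcomp Require Import reals ring lra.
Import Order.TTheory GRing.Theory Num.Theory.
Set Implicit Arguments. Unset Strict Implicit. Unset Printing Implicit Defensive.

Lemma connect_inv (T : finType) (e : rel T) (P : pred T) x y :
  P x -> (forall u v, P u -> e u v -> P v) -> connect e x y -> P y.
Proof.
move=> Px H /connectP [p pth ->]; elim: p x Px pth => //= z p IH x Px /andP [exz pth].
exact: IH (H _ _ Px exz) pth.
Qed.

Definition cls (T : finType) (r : rel T) x := [set y | connect r x y].
Definition Sset (T : finType) (r : rel T) := [set cls r x | x : T].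

Lemma cls_eq (T : finType) (r : rel T) x y : symmetric r -> connect r x y -> cls r x = cls r y.
Proof.
move=> sr cxy; apply/setP => z; rewrite !inE.
have cs := sym_connect_sym sr.
apply/idP/idP => h; first by apply: connect_trans h; rewrite cs.
exact: connect_trans cxy h.
Qed.

Lemma Sset_le1 (T : finType) (r : rel T) : (forall x y, connect r x y) -> (#|Sset r| <= 1)%N.
Proof.
move=> H; have sub : Sset r \subset [set setT].
  apply/subsetP => C /imsetP [x _ ->]; rewrite inE; apply/eqP/setP => y; rewrite !inE; exact: H.
by rewrite (leq_trans (subset_leq_card sub)) // cards1.
Qed.

Lemma Sset_ge1 (T : finType) (r : rel T) (x : T) : (1 <= #|Sset r|)%N.
Proof. by apply/card_gt0P; exists (cls r x); apply: imset_f. Qed.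

Lemma comb (T : finType) (r0 r1 : rel T) (a b : T) :
  symmetric r0 -> symmetric r1 -> subrel r0 r1 ->
  (forall x y, r1 x y -> [|| r0 x y, (x == a) && (y == b) | (x == b) && (y == a)]) ->
  r1 a b ->
  (#|Sset r1| <= #|Sset r0| <= (#|Sset r1|).+1)%N /\
  (~~ connect r0 a b -> #|Sset r0| = (#|Sset r1|).+1).
Proof.
move=> s0 s1 sub01 H1 r1ab.
have cs0 := sym_connect_sym s0; have cs1 := sym_connect_sym s1.
have c01 : forall x y, connect r0 x y -> connect r1 x y.
  move=> x y; apply: connect_sub => u v /sub01; exact: connect1.
pose f (C : {set T}) := [set y | [exists x in C, connect r1 x y]].
have fE : forall x, f (cls r0 x) = cls r1 x.
  move=> x; apply/setP => y; rewrite !inE; apply/existsP/idP.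
    by case=> z /andP []; rewrite inE => /c01; exact: connect_trans.
  by move=> h; exists x; rewrite inE connect0.
have S1E : Sset r1 = f @: Sset r0.
  by rewrite /Sset -imset_comp; apply: eq_imset => x /=; rewrite fE.
have inv : forall x y, connect r1 x y ->
   [|| connect r0 x y, connect r0 x a && connect r0 b y | connect r0 x b && connect r0 a y].
  move=> x y; apply: (connect_inv (P := fun z =>
   [|| connect r0 x z, connect r0 x a && connect r0 b z | connect r0 x b && connect r0 a z]));
    first by rewrite /= connect0.
  move=> u v Iu /H1 /orP [r0uv|/orP [/andP [/eqP eua /eqP evb]|/andP [/eqP eub /eqP eva]]].
  - case/or3P: Iu => [h|/andP [h1 h2]|/andP [h1 h2]].
    + by rewrite (connect_trans h (connect1 r0uv)).
    + by rewrite h1 (connect_trans h2 (connect1 r0uv)) orbT.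
    + by rewrite h1 (connect_trans h2 (connect1 r0uv)) !orbT.
  - subst u v; case/or3P: Iu => [h|/andP [h1 h2]|/andP [h1 h2]].
    + by rewrite h connect0 orbT.
    + by rewrite h1 connect0 orbT.
    + by rewrite h1.
  - subst u v; case/or3P: Iu => [h|/andP [h1 h2]|/andP [h1 h2]].
    + by rewrite h connect0 !orbT.
    + by rewrite h1.
    + by rewrite h1 connect0 !orbT.
have inj : {in Sset r0 :\ cls r0 b &, injective f}.
  move=> C1 C2; rewrite !inE => /andP [nb1 /imsetP [x _ ?]] /andP [nb2 /imsetP [y _ ?]]; subst C1 C2.
  rewrite !fE => e12.
  have cxy : connect r1 x y.
    have : y \in cls r1 y by rewrite inE connect0.
    by rewrite -e12 inE.
  have nxb : ~~ connect r0 x b by apply/negP => h; move/negP: nb1; apply; rewrite (cls_eq s0 h).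
  have nyb : ~~ connect r0 y b by apply/negP => h; move/negP: nb2; apply; rewrite (cls_eq s0 h).
  case/or3P: (inv _ _ cxy) => [h|/andP [_ h]|/andP [h _]].
  - exact: cls_eq.
  - by rewrite cs0 h in nyb.
  - by rewrite h in nxb.
have le1 : (#|Sset r1| <= #|Sset r0|)%N by rewrite S1E leq_imset_card.
have le2 : (#|Sset r0| <= (#|Sset r1|).+1)%N.
  have ec := eqP (introT imset_injP inj).
  have h : (#|Sset r0 :\ cls r0 b| <= #|Sset r1|)%N.
    by rewrite -ec S1E subset_leq_card // imsetS // subsetDl.
  rewrite (cardsD1 (cls r0 b)); case: (_ \in _) => /=; rewrite ?add1n ?add0n ?ltnS //.
  exact: leq_trans h (leqnSn _).
split; first by rewrite le1.
move=> nab; apply/eqP; rewrite eqn_leq le2 /= ltn_neqAle le1 andbT.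
rewrite S1E; apply/negP => /imset_injP injf.
have : cls r0 a = cls r0 b.
  apply: injf; try exact: imset_f.
  by rewrite !fE; apply: cls_eq => //; exact: connect1.
move/setP/(_ b); rewrite !inE connect0 => h.
by rewrite h in nab.
Qed.
Local Open Scope ring_scope.

Definition tog (E : finType) (e : E) (w : config E) : config E :=
  [ffun f => if f == e then ~~ w e else w f].
Definition upd (E : finType) (w : config E) (e : E) (b : bool) : config E :=
  [ffun f => if f == e then b else w f].
Definition Dset (E : finType) (w0 : config E) (S : {set E}) : {set config E} :=
  [set eta : config E | [forall f, (f \notin S) ==> (eta f == w0 f)]].
Definition pw (E : finType) (R : realType) (pe : E -> R) (S : {set E}) (eta : config E) :=
  \prod_(f in S) edge_weight (pe f) (eta f).

Lemma togE (E : finType) (e f : E) w : tog e w f = if f == e then ~~ w e else w f.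
Proof. by rewrite /tog ffunE. Qed.

Lemma tog_e (E : finType) (e : E) w : tog e w e = ~~ w e.
Proof. by rewrite togE eqxx. Qed.

Lemma tog_ne (E : finType) (e f : E) w : f != e -> tog e w f = w f.
Proof. by rewrite togE => /negbTE ->. Qed.

Lemma togK (E : finType) (e : E) : involutive (tog e).
Proof.
move=> w; apply/ffunP => f; rewrite !togE; case: eqP => [->|_]; first by rewrite eqxx negbK.
by [].
Qed.

Lemma memD (E : finType) (w0 : config E) (S : {set E}) eta :
  (eta \in Dset w0 S) = [forall f, (f \notin S) ==> (eta f == w0 f)].
Proof. by rewrite inE. Qed.

Lemma memD1 (E : finType) (w0 : config E) (S : {set E}) e b eta : e \in S ->
  (eta \in Dset (upd w0 e b) (S :\ e)) = (eta \in Dset w0 S) && (eta e == b).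
Proof.
move=> eS; rewrite !memD; apply/forallP/andP.
  move=> H; split.
    apply/forallP => f; apply/implyP => fS.
    have fe : f != e by apply: contraNneq fS => ->.
    by have := H f; rewrite in_setD1 (negbTE fS) andbF /= /upd ffunE (negbTE fe).
  by have := H e; rewrite in_setD1 eqxx /= /upd ffunE eqxx.
move=> [/forallP H /eqP he] f; apply/implyP; rewrite in_setD1 negb_and negbK /upd ffunE.
case: (eqVneq f e) => [->|_] /=; first by rewrite he.
by move=> fS; have := H f; rewrite fS.
Qed.

Lemma tog_D (E : finType) (w0 : config E) (S : {set E}) e eta : e \in S ->
  (tog e eta \in Dset w0 S) = (eta \in Dset w0 S).
Proof.
move=> eS; rewrite !memD; apply: eq_forallb => f.
case: (eqVneq f e) => [->|fe]; first by rewrite eS.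
by rewrite tog_ne.
Qed.

Lemma tog_D1 (E : finType) (w0 : config E) (S : {set E}) e eta : e \in S ->
  (tog e eta \in Dset (upd w0 e false) (S :\ e)) = (eta \in Dset (upd w0 e true) (S :\ e)).
Proof.
move=> eS; rewrite !memD1 // tog_D // tog_e.
by case: (eta e).
Qed.

Lemma split_sum (E : finType) (R : realType) (w0 : config E) (S : {set E}) e (P : pred (config E))
  (F : config E -> R) : e \in S ->
  \sum_(eta in Dset w0 S | P eta) F eta =
  \sum_(eta in Dset (upd w0 e true) (S :\ e) | P eta) F eta +
  \sum_(eta in Dset (upd w0 e false) (S :\ e) | P eta) F eta.
Proof.
move=> eS; rewrite [LHS](bigID (fun eta : config E => eta e)) /=; congr (_ + _); apply: eq_bigl => eta.
  by rewrite memD1 //; case: (eta e); rewrite ?andbT ?andbF //= andbC.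
by rewrite memD1 //; case: (eta e); rewrite ?andbT ?andbF //= andbC.
Qed.

Lemma split_sumT (E : finType) (R : realType) (w0 : config E) (S : {set E}) e
  (F : config E -> R) : e \in S ->
  \sum_(eta in Dset w0 S) F eta =
  \sum_(eta in Dset (upd w0 e true) (S :\ e)) F eta +
  \sum_(eta in Dset (upd w0 e false) (S :\ e)) F eta.
Proof.
move=> eS; rewrite [LHS](bigID (fun eta : config E => eta e)) /=; congr (_ + _); apply: eq_bigl => eta.
  by rewrite memD1 //; case: (eta e); rewrite ?andbT ?andbF.
by rewrite memD1 //; case: (eta e); rewrite ?andbT ?andbF.
Qed.

Lemma reindex_tog (E : finType) (R : realType) (w0 : config E) (S : {set E}) e (P : pred (config E))
  (F : config E -> R) : e \in S ->
  \sum_(eta in Dset (upd w0 e true) (S :\ e) | P eta) F eta =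
  \sum_(eta in Dset (upd w0 e false) (S :\ e) | P (tog e eta)) F (tog e eta).
Proof.
move=> eS; rewrite (reindex_inj (can_inj (togK e))) /=; apply: eq_bigl => eta.
by rewrite -tog_D1 // togK.
Qed.

Lemma reindex_togT (E : finType) (R : realType) (w0 : config E) (S : {set E}) e
  (F : config E -> R) : e \in S ->
  \sum_(eta in Dset (upd w0 e true) (S :\ e)) F eta =
  \sum_(eta in Dset (upd w0 e false) (S :\ e)) F (tog e eta).
Proof.
move=> eS; rewrite (reindex_inj (can_inj (togK e))) /=; apply: eq_bigl => eta.
by rewrite -tog_D1 // togK.
Qed.

Lemma ew_ge0 (R : realType) (x : R) b : 0 <= x <= 1 -> 0 <= edge_weight x b.
Proof. by case/andP=> h0 h1; case: b => //=; rewrite subr_ge0. Qed.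

Lemma pw_ge0 (E : finType) (R : realType) (pe : E -> R) (S : {set E}) eta :
  (forall f, 0 <= pe f <= 1) -> 0 <= pw pe S eta.
Proof. by move=> H; apply: prodr_ge0 => f _; apply: ew_ge0. Qed.

Lemma pw_split (E : finType) (R : realType) (pe : E -> R) (S : {set E}) e eta : e \in S ->
  pw pe S eta = edge_weight (pe e) (eta e) * pw pe (S :\ e) eta.
Proof. by move=> eS; rewrite /pw (big_setD1 _ eS). Qed.

Lemma pw_tog (E : finType) (R : realType) (pe : E -> R) (S : {set E}) e eta :
  pw pe (S :\ e) (tog e eta) = pw pe (S :\ e) eta.
Proof.
apply: eq_bigr => f; rewrite in_setD1 => /andP [fe _]; by rewrite tog_ne.
Qed.

Lemma dom_step (E : finType) (R : realType) (pe : E -> R) (w : config E -> R)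
  (A : {set config E}) (S : {set E}) (e : E) (w0 : config E) :
  increasing A -> (forall f, 0 <= pe f <= 1) -> e \in S ->
  (forall b, (\sum_(eta in Dset (upd w0 e b) (S :\ e)) w eta) *
             (\sum_(eta in Dset (upd w0 e b) (S :\ e) | eta \in A) pw pe (S :\ e) eta)
           <= \sum_(eta in Dset (upd w0 e b) (S :\ e) | eta \in A) w eta) ->
  pe e * (\sum_(eta in Dset (upd w0 e false) (S :\ e)) w eta)
     <= (1 - pe e) * (\sum_(eta in Dset (upd w0 e true) (S :\ e)) w eta) ->
  (\sum_(eta in Dset w0 S) w eta) * (\sum_(eta in Dset w0 S | eta \in A) pw pe S eta)
     <= \sum_(eta in Dset w0 S | eta \in A) w eta.
Proof.
move=> incA pe01 eS IH agg.
set D1 := Dset (upd w0 e true) (S :\ e).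
set D0 := Dset (upd w0 e false) (S :\ e).
rewrite (split_sumT _ _ eS) (split_sum _ _ _ eS) (split_sum _ _ _ eS).
have e1 : \sum_(eta in D1 | eta \in A) pw pe S eta =
          pe e * \sum_(eta in D1 | eta \in A) pw pe (S :\ e) eta.
  rewrite mulr_sumr; apply: eq_bigr => eta /andP [h _].
  by rewrite (pw_split _ _ eS); move: h; rewrite memD1 // => /andP [_ /eqP ->].
have e0 : \sum_(eta in D0 | eta \in A) pw pe S eta =
          (1 - pe e) * \sum_(eta in D0 | eta \in A) pw pe (S :\ e) eta.
  rewrite mulr_sumr; apply: eq_bigr => eta /andP [h _].
  by rewrite (pw_split _ _ eS); move: h; rewrite memD1 // => /andP [_ /eqP ->].
rewrite e1 e0.
have hx : \sum_(eta in D0 | eta \in A) pw pe (S :\ e) eta <=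
          \sum_(eta in D1 | eta \in A) pw pe (S :\ e) eta.
  rewrite /D1 (reindex_tog _ _ _ eS) -/D0.
  under [X in _ <= X]eq_bigr do rewrite pw_tog.
  rewrite big_mkcond [X in _ <= X]big_mkcond /=; apply: ler_sum => eta _.
  case: (boolP (eta \in D0)) => //= h0; case: (boolP (eta \in A)) => hA /=.
    suff -> : tog e eta \in A by [].
    apply: (incA eta) => //; apply/forallP => f; apply/implyP => hf.
    rewrite togE; case: eqP => [fe|//]; subst f.
    by move: h0; rewrite memD1 // => /andP [_ /eqP he]; rewrite he in hf.
  by case: (_ \in A) => //; apply: pw_ge0.
have := IH true; have := IH false; rewrite -/D1 -/D0.
set W1 := \sum_(eta in D1) w eta; set W0 := \sum_(eta in D0) w eta.
set a1 := \sum_(eta in D1 | eta \in A) w eta; set a0 := \sum_(eta in D0 | eta \in A) w eta.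
set x1 := \sum_(eta in D1 | eta \in A) pw pe (S :\ e) eta.
set x0 := \sum_(eta in D0 | eta \in A) pw pe (S :\ e) eta.
set p := pe e.
move=> h0 h1.
have h : 0 <= (x1 - x0) * ((1-p)*W1 - p*W0) by apply: mulr_ge0; rewrite subr_ge0.
nra.
Qed.

Lemma agg_from_pw (E : finType) (R : realType) (pe : E -> R) (w : config E -> R)
  (S : {set E}) (e : E) (w0 : config E) : e \in S ->
  (forall eta : config E, eta e = false -> pe e * w eta <= (1 - pe e) * w (tog e eta)) ->
  pe e * (\sum_(eta in Dset (upd w0 e false) (S :\ e)) w eta)
     <= (1 - pe e) * (\sum_(eta in Dset (upd w0 e true) (S :\ e)) w eta).
Proof.
move=> eS H; rewrite (reindex_togT _ _ eS) !mulr_sumr; apply: ler_sum => eta.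
by rewrite memD1 // => /andP [_ /eqP he]; apply: H.
Qed.

Lemma dom_ind (E : finType) (R : realType) (pe : E -> R) (w : config E -> R)
  (A : {set config E}) :
  increasing A -> (forall f, 0 <= pe f <= 1) ->
  forall (n : nat) (S : {set E}), #|S| = n ->
  (forall (eta : config E) e, e \in S -> eta e = false -> pe e * w eta <= (1 - pe e) * w (tog e eta)) ->
  forall w0, (\sum_(eta in Dset w0 S) w eta) *
             (\sum_(eta in Dset w0 S | eta \in A) pw pe S eta)
           <= \sum_(eta in Dset w0 S | eta \in A) w eta.
Proof.
move=> incA pe01; elim=> [|n IH] S cS H w0.
  move/eqP: cS; rewrite cards_eq0 => /eqP ->.
  have -> : Dset w0 set0 = [set w0].
    apply/setP => eta; rewrite memD inE; apply/forallP/eqP => [h|->].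
      by apply/ffunP => f; have := h f; rewrite inE /= => /eqP.
    by move=> f; rewrite eqxx implybT.
  rewrite big_set1 !big_mkcondr !big_set1 /pw big_set0.
  by case: (w0 \in A); rewrite ?mulr1 ?mulr0.
have [e eS] : exists e, e \in S by apply/card_gt0P; rewrite cS.
apply: (dom_step incA pe01 eS).
  move=> b; apply: IH.
    by move: cS; rewrite (cardsD1 e) eS add1n => [[]].
  by move=> eta f; rewrite in_setD1 => /andP [_ fS]; apply: H.
by apply: agg_from_pw => // eta; apply: H.
Qed.

Lemma dom_top (E : finType) (R : realType) (pe : E -> R) (w : config E -> R)
  (A : {set config E}) (e0 : E) :
  increasing A -> (forall f, 0 <= pe f <= 1) ->
  (forall (eta : config E) e, e != e0 -> eta e = false -> pe e * w eta <= (1 - pe e) * w (tog e eta)) ->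
  pe e0 * (\sum_(eta : config E | ~~ eta e0) w eta) <= (1 - pe e0) * (\sum_(eta : config E | eta e0) w eta) ->
  (\sum_eta w eta) * prod_measure pe A <= \sum_(eta in A) w eta.
Proof.
move=> incA pe01 H agg.
pose w0 : config E := [ffun => false].
have DT : Dset w0 setT = setT.
  by apply/setP => eta; rewrite memD inE; apply/forallP => f; rewrite inE.
have eT : e0 \in [set: E] by rewrite inE.
have := dom_step (w := w) (w0 := w0) incA pe01 eT.
rewrite DT.
have -> : \sum_(eta in [set: config E]) w eta = \sum_eta w eta.
  by apply: eq_bigl => eta; rewrite inE.
have -> : \sum_(eta in [set: config E] | eta \in A) w eta = \sum_(eta in A) w eta.
  by apply: eq_bigl => eta; rewrite inE.
have -> : \sum_(eta in [set: config E] | eta \in A) pw pe [set: E] eta = prod_measure pe A.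
  rewrite /prod_measure; apply: eq_big => eta; first by rewrite inE.
  by move=> _; rewrite /pw; apply: eq_bigl => f; rewrite inE.
apply.
  move=> b; apply: (dom_ind incA pe01 (erefl _)).
  by move=> eta e; rewrite in_setD1 => /andP [ne _]; apply: H.
have -> : \sum_(eta in Dset (upd w0 e0 false) (setT :\ e0)) w eta = \sum_(eta : config E | ~~ eta e0) w eta.
  by apply: eq_bigl => eta; rewrite memD1 // DT inE /=; case: (eta e0).
have -> : \sum_(eta in Dset (upd w0 e0 true) (setT :\ e0)) w eta = \sum_(eta : config E | eta e0) w eta.
  by apply: eq_bigl => eta; rewrite memD1 // DT inE /=; case: (eta e0).
exact: agg.
Qed.

Lemma adjF_sym (V E : finType) (src dst : E -> V) (F : pred E) : symmetric (adjF src dst F).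
Proof. by move=> x y; rewrite /adjF; apply: eq_existsb => e; rewrite orbC. Qed.

Lemma clrel_sym (V E : finType) (src dst : E -> V) B alpha (w : config E) :
  symmetric (clrel src dst B alpha w).
Proof.
move=> x y; rewrite /clrel adjF_sym /wired; congr (_ || _).
by rewrite andbA [(x \in B) && _]andbC -andbA eq_sym.
Qed.

Lemma kcl_tog (V E : finType) (src dst : E -> V) B alpha (eta : config E) (e : E) :
  eta e = false ->
  (kcl src dst B alpha (tog e eta) <= kcl src dst B alpha eta <= (kcl src dst B alpha (tog e eta)).+1)%N /\
  (~~ connect (clrel src dst B alpha eta) (src e) (dst e) ->
      kcl src dst B alpha eta = (kcl src dst B alpha (tog e eta)).+1).
Proof.
move=> he.
apply: (comb (clrel_sym _ _ _ _ _) (clrel_sym _ _ _ _ _)).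
- move=> x y /orP [/existsP [f /andP [hf hxy]]|hw]; last by rewrite /clrel hw orbT.
  apply/orP; left; apply/existsP; exists f; rewrite hxy andbT togE.
  by case: eqP => [ef|//]; rewrite ef he in hf.
- move=> x y /orP [/existsP [f /andP [hf hxy]]|hw]; last by rewrite /clrel hw orbT.
  case: (eqVneq f e) => [ef|fe].
    subst f; apply/orP; right.
    by case/orP: hxy => /andP [/eqP <- /eqP <-]; rewrite !eqxx ?orbT.
  apply/orP; left; apply/orP; left; apply/existsP; exists f.
  by rewrite hxy andbT -(tog_ne eta fe).
- apply/orP; left; apply/existsP; exists e; rewrite tog_e he /=.
  by rewrite !eqxx.
Qed.

Lemma connect_all (V E : finType) (src dst : E -> V) (r : rel V) :
  symmetric r -> connected_graph src dst ->
  (forall e, connect r (src e) (dst e)) -> forall x y, connect r x y.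
Proof.
move=> sr cg H x y; apply: (connect_sub _ (cg x y)) => u v /existsP [e /andP [_ h]].
case/orP: h => /andP [/eqP <- /eqP <-] //.
by rewrite (sym_connect_sym sr).
Qed.

Lemma kcl_open1 (V E : finType) (src dst : E -> V) B alpha (x : V) :
  connected_graph src dst -> kcl src dst B alpha (all_open E) = 1%N.
Proof.
move=> cg; apply/eqP; rewrite eqn_leq (Sset_ge1 _ x) andbT.
apply: Sset_le1 => u v; apply: (connect_sub _ (cg u v)) => s t h.
apply: connect1; apply/orP; left; move/existsP: h => [f hf]; apply/existsP; exists f.
by rewrite ffunE.
Qed.

Lemma nonbridge (V E : finType) (src dst : E -> V) B alpha :
  connected_graph src dst -> ~ is_tree_Galpha src dst B alpha ->
  (2 <= nb_vertices_Galpha src dst B alpha)%N ->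
  exists e, exists2 eta : config E, eta e = false &
     kcl src dst B alpha eta = kcl src dst B alpha (tog e eta).
Proof.
move=> cg nt n2.
have [x _] : exists x : V, true.
  move: n2; rewrite /nb_vertices_Galpha /kcl => /(leq_trans (isT : (0 < 2)%N)) /card_gt0P [C].
  by case/imsetP => x _ _; exists x.
case: (boolP [exists e, kcl src dst B alpha (remove_edge e) == 1%N]) => [/existsP [e /eqP he]|hn].
  exists e, (remove_edge e); first by rewrite ffunE eqxx.
  have -> : tog e (remove_edge e) = all_open E.
    apply/ffunP => f; rewrite togE !ffunE; case: (eqVneq f e) => [_|fe]; first by rewrite eqxx.
    by rewrite ?fe.
  by rewrite he (kcl_open1 B alpha x cg).
exfalso; apply: nt; split; first exact: kcl_open1 B alpha x cg.
by move=> e he; move/existsPn: hn => /(_ e); rewrite he.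
Qed.

Lemma nonwired (V E : finType) (src dst : E -> V) B alpha :
  connected_graph src dst ->
  (2 <= nb_vertices_Galpha src dst B alpha)%N ->
  exists e, exists2 eta : config E, eta e = false &
     kcl src dst B alpha eta = (kcl src dst B alpha (tog e eta)).+1.
Proof.
move=> cg n2.
case: (boolP [exists e, ~~ connect (clrel src dst B alpha (all_closed E)) (src e) (dst e)]).
  move=> /existsP [e he]; exists e, (all_closed E); first by rewrite ffunE.
  have h0 : all_closed E e = false by rewrite ffunE.
  by case: (kcl_tog src dst B alpha h0) => _ /(_ he).
move=> /existsPn H; exfalso.
have := connect_all (clrel_sym src dst B alpha (all_closed E)) cg.
move=> /(_ (fun e => negbNE (H e))) hall.
have := Sset_le1 hall; rewrite -/(kcl src dst B alpha (all_closed E)).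
by move: n2; rewrite /nb_vertices_Galpha => n2 h; have := leq_trans n2 h.
Qed.

Lemma ew_gt0 (R : realType) (p : R) b : 0 < p < 1 -> 0 < edge_weight p b.
Proof. by case/andP=> h0 h1; case: b => //=; rewrite subr_gt0. Qed.

Lemma w_gt0 (V E : finType) (src dst : E -> V) B alpha (R : realType) (p q : R) (eta : config E) :
  0 < p < 1 -> 0 < q -> 0 < fk_weight src dst B alpha p q eta.
Proof.
move=> hp hq; rewrite /fk_weight; apply: mulr_gt0; last exact: exprn_gt0.
by apply: prodr_gt0 => f _; apply: ew_gt0.
Qed.

Lemma fk_id (V E : finType) (src dst : E -> V) B alpha (R : realType) (p q m : R)
  (eta : config E) (e : E) (d : nat) :
  eta e = false ->
  kcl src dst B alpha eta = (kcl src dst B alpha (tog e eta) + d)%N ->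
  (1 - m) * fk_weight src dst B alpha p q (tog e eta) - m * fk_weight src dst B alpha p q eta
  = ((\prod_(f | f != e) edge_weight p (eta f)) * q ^+ kcl src dst B alpha (tog e eta)) *
    ((1 - m) * p - m * (1 - p) * q ^+ d).
Proof.
move=> he hk; rewrite /fk_weight hk exprD.
rewrite [\prod_f edge_weight p (tog e eta f)](bigD1 e) //= [\prod_f edge_weight p (eta f)](bigD1 e) //=.
rewrite tog_e he /=.
have -> : \prod_(i | i != e) edge_weight p (tog e eta i) = \prod_(i | i != e) edge_weight p (eta i).
  by apply: eq_bigr => f fe; rewrite tog_ne.
move: (\prod_(i | i != e) edge_weight p (eta i)) (q ^+ kcl src dst B alpha (tog e eta)) (q ^+ d) => P Q Qd.
ring.
Qed.

Lemma X_gt0 (E : finType) (R : realType) (p q : R) (eta : config E) (e : E) k :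
  0 < p < 1 -> 0 < q -> 0 < (\prod_(f | f != e) edge_weight p (eta f)) * q ^+ k.
Proof.
move=> hp hq; apply: mulr_gt0; last exact: exprn_gt0.
by apply: prodr_gt0 => f _; apply: ew_gt0.
Qed.

Lemma g1E (R : realType) (p q m : R) : 0 < p < 1 -> 0 < q ->
  (1 - m) * p - m * (1 - p) * q ^+ 1 = (p + q * (1 - p)) * (pprime p q - m).
Proof.
move=> /andP [h0 h1] hq.
have hD : p + q * (1 - p) != 0.
  by rewrite gt_eqF //; apply: ltr_wpDr => //; apply: mulr_ge0; rewrite ?subr_ge0 ltW.
rewrite /pprime [RHS]mulrBr mulrCA divff // mulr1 expr1; ring.
Qed.

Lemma D_gt0 (R : realType) (p q : R) : 0 < p < 1 -> 0 < q -> 0 < p + q * (1 - p).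
Proof.
move=> /andP [h0 h1] hq; apply: ltr_wpDr => //; apply: mulr_ge0; rewrite ?subr_ge0 ltW //.
Qed.

Lemma cond_weak (V E : finType) (src dst : E -> V) B alpha (R : realType) (p q m : R)
  (eta : config E) (e : E) :
  0 < p < 1 -> 0 < q -> eta e = false ->
  (m <= p -> m <= pprime p q ->
     m * fk_weight src dst B alpha p q eta <= (1 - m) * fk_weight src dst B alpha p q (tog e eta)) /\
  (p <= m -> pprime p q <= m ->
     (1 - m) * fk_weight src dst B alpha p q (tog e eta) <= m * fk_weight src dst B alpha p q eta).
Proof.
move=> hp hq he.
case: (kcl_tog src dst B alpha he) => /andP [k1 k2] _.
set k0 := kcl _ _ _ _ eta in k1 k2 *; set kt := kcl _ _ _ _ (tog e eta) in k1 k2 *.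
have hk : k0 = (kt + (k0 - kt))%N by rewrite subnKC.
have id := @fk_id _ _ src dst B alpha _ p q m _ _ _ he hk.
have hX := X_gt0 eta e kt hp hq.
have hD := D_gt0 hp hq.
move: id hX; set X := (\prod_(f | f != e) edge_weight p (eta f)) * q ^+ kt => id hX.
have : (k0 - kt = 0 \/ k0 - kt = 1)%N.
  by move: k2; rewrite -addn1 -leq_subLR; case: (k0 - kt)%N => [|[|n]]; auto.
case=> hd; rewrite hd in id.
- split=> [hm _|hm _]; rewrite -subr_ge0 ?id; last rewrite -opprB id -mulrN.
    by rewrite pmulr_rge0 // expr0 mulr1; lra.
  by rewrite pmulr_rge0 // expr0 mulr1; lra.
- rewrite g1E // in id; split=> [_ hm|_ hm]; rewrite -subr_ge0 ?id; last rewrite -opprB id -mulrN.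
    by rewrite pmulr_rge0 // pmulr_rge0 // subr_ge0.
  by rewrite pmulr_rge0 // -mulrN pmulr_rge0 // oppr_ge0 subr_le0.
Qed.

Lemma cond_strict0 (V E : finType) (src dst : E -> V) B alpha (R : realType) (p q m : R)
  (eta : config E) (e : E) :
  0 < p < 1 -> 0 < q -> eta e = false ->
  kcl src dst B alpha eta = (kcl src dst B alpha (tog e eta) + 0)%N ->
  (m < p -> m * fk_weight src dst B alpha p q eta < (1 - m) * fk_weight src dst B alpha p q (tog e eta)) /\
  (p < m -> (1 - m) * fk_weight src dst B alpha p q (tog e eta) < m * fk_weight src dst B alpha p q eta).
Proof.
move=> hp hq he hk.
have := @fk_id _ _ src dst B alpha _ p q m _ _ _ he hk.
have hX := X_gt0 eta e (kcl src dst B alpha (tog e eta)) hp hq.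
set X := _ * _ in hX *; move=> id.
split=> hm; rewrite -subr_gt0 ?id; last rewrite -opprB id -mulrN.
  by rewrite pmulr_rgt0 // expr0 mulr1; lra.
by rewrite pmulr_rgt0 // expr0 mulr1; lra.
Qed.

Lemma cond_strict1 (V E : finType) (src dst : E -> V) B alpha (R : realType) (p q m : R)
  (eta : config E) (e : E) :
  0 < p < 1 -> 0 < q -> eta e = false ->
  kcl src dst B alpha eta = (kcl src dst B alpha (tog e eta) + 1)%N ->
  (m < pprime p q -> m * fk_weight src dst B alpha p q eta < (1 - m) * fk_weight src dst B alpha p q (tog e eta)) /\
  (pprime p q < m -> (1 - m) * fk_weight src dst B alpha p q (tog e eta) < m * fk_weight src dst B alpha p q eta).
Proof.
move=> hp hq he hk.
have := @fk_id _ _ src dst B alpha _ p q m _ _ _ he hk.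
have hX := X_gt0 eta e (kcl src dst B alpha (tog e eta)) hp hq.
have hD := D_gt0 hp hq.
set X := _ * _ in hX *; rewrite g1E //; move=> id.
split=> hm; rewrite -subr_gt0 ?id; last rewrite -opprB id -mulrN.
  by rewrite pmulr_rgt0 // pmulr_rgt0 // subr_gt0.
by rewrite pmulr_rgt0 // -mulrN pmulr_rgt0 // oppr_gt0 subr_lt0.
Qed.

Lemma ltr_sum_ex (I : finType) (R : realType) (P : pred I) (F G : I -> R) (i0 : I) :
  (forall i, P i -> F i <= G i) -> P i0 -> F i0 < G i0 ->
  \sum_(i | P i) F i < \sum_(i | P i) G i.
Proof.
move=> H Pi0 lt0; rewrite (bigD1 i0 Pi0) [X in _ < X](bigD1 i0 Pi0) /=.
by apply: ltr_leD => //; apply: ler_sum => i /andP [Pi _]; apply: H.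
Qed.

Lemma sum_tog (E : finType) (R : realType) (F : config E -> R) (e0 : E) :
  \sum_(eta : config E | eta e0) F eta = \sum_(eta : config E | ~~ eta e0) F (tog e0 eta).
Proof.
rewrite (reindex_inj (can_inj (togK e0))) /=; apply: eq_bigl => eta.
by rewrite tog_e.
Qed.

Lemma pprime_bnd (R : realType) (p q : R) : 0 < p < 1 -> 0 < q -> 0 < pprime p q <= 1.
Proof.
move=> hp hq; have hD := D_gt0 hp hq; case/andP: hp => h0 h1.
rewrite /pprime divr_gt0 //= ler_pdivrMr // mul1r lerDl; apply: mulr_ge0; rewrite ?subr_ge0 ltW //.
Qed.

Lemma lower_ok (V E : finType) (src dst : E -> V) B alpha (R : realType) (p q : R)
  (e0 : E) (eta0 : config E) :
  0 < p < 1 -> 0 < q -> eta0 e0 = false ->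
  Num.min p (pprime p q) * fk_weight src dst B alpha p q eta0 <
     (1 - Num.min p (pprime p q)) * fk_weight src dst B alpha p q (tog e0 eta0) ->
  exists eps : E -> R, (forall e, 0 <= eps e <= 1) /\ (exists e, eps e != 0) /\
    st_dom (prod_measure (fun e => Num.min p (pprime p q) + eps e))
           (fk_measure src dst B alpha p q).
Proof.
move=> hp hq he0 hstrict.
set m := Num.min p (pprime p q) in hstrict *.
set w := fk_weight src dst B alpha p q in hstrict *.
have [hp'0 hp'1] := andP (pprime_bnd hp hq).
have hmp : m <= p by rewrite /m ge_min lexx.
have hmp' : m <= pprime p q by rewrite /m ge_min lexx orbT.
have hm0 : 0 <= m by rewrite /m le_min (ltW hp'0) andbT; case/andP: hp => /ltW.
have hw : forall eta, 0 < w eta by move=> eta; apply: w_gt0.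
set W1 := \sum_(eta : config E | eta e0) w eta.
set W0 := \sum_(eta : config E | ~~ eta e0) w eta.
set Z := \sum_(eta : config E) w eta.
have hZ : Z = W1 + W0 by rewrite /Z (bigID (fun eta : config E => eta e0)).
have hW0 : 0 <= W0 by apply: sumr_ge0 => eta _; apply: ltW.
have hW1 : 0 <= W1 by apply: sumr_ge0 => eta _; apply: ltW.
have hlt : m * W0 < (1 - m) * W1.
  rewrite /W1 sum_tog /W0 !mulr_sumr; apply: (ltr_sum_ex (i0 := eta0)) => //; last by rewrite he0.
  move=> eta /negbTE he; by case: (cond_weak src dst B alpha m hp hq he) => /(_ hmp hmp').
have hZ0 : 0 < Z by rewrite hZ; nra.
set t := W1 / Z.
have tZ : t * Z = W1 by rewrite /t divfK // gt_eqF.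
have hmt : m < t by rewrite /t ltr_pdivlMr // hZ; nra.
have ht1 : t <= 1 by rewrite /t ler_pdivrMr // mul1r hZ lerDl.
have ht0 : 0 <= t by rewrite /t divr_ge0 // ltW.
exists (fun e => if e == e0 then t - m else 0); split; [|split].
- move=> e; case: eqP => _; last by rewrite lexx ler01.
  by rewrite subr_ge0 ltW //=; lra.
- by exists e0; rewrite eqxx subr_eq0 gt_eqF.
move=> A incA; rewrite /fk_measure -/w; rewrite /fk_Z -/w -/Z.
rewrite ler_pdivlMr // mulrC.
apply: (dom_top (e0 := e0) incA).
- move=> f; case: eqP => _; last by rewrite addr0 hm0 /=; lra.
  by rewrite addrC subrK ht0 ht1.
- move=> eta e ne he; rewrite (negbTE ne) addr0.
  by case: (cond_weak src dst B alpha m hp hq he) => /(_ hmp hmp').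
- rewrite eqxx addrC subrK -/W1 -/W0; rewrite hZ in tZ; nra.
Qed.

Lemma upper_ok (V E : finType) (src dst : E -> V) B alpha (R : realType) (p q : R)
  (e0 : E) (eta0 : config E) :
  0 < p < 1 -> 0 < q -> eta0 e0 = false ->
  (1 - Num.max p (pprime p q)) * fk_weight src dst B alpha p q (tog e0 eta0) <
     Num.max p (pprime p q) * fk_weight src dst B alpha p q eta0 ->
  exists eps : E -> R, (forall e, 0 <= eps e <= 1) /\ (exists e, eps e != 0) /\
    st_dom (fk_measure src dst B alpha p q)
           (prod_measure (fun e => Num.max p (pprime p q) - eps e)).
Proof.
move=> hp hq he0 hstrict.
set m := Num.max p (pprime p q) in hstrict *.
set w := fk_weight src dst B alpha p q in hstrict *.
have [hp'0 hp'1] := andP (pprime_bnd hp hq).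
have hmp : p <= m by rewrite /m le_max lexx.
have hmp' : pprime p q <= m by rewrite /m le_max lexx orbT.
have hm1 : m <= 1 by rewrite /m ge_max hp'1 andbT; case/andP: hp => _ /ltW.
have hw : forall eta, 0 < w eta by move=> eta; apply: w_gt0.
set W1 := \sum_(eta : config E | eta e0) w eta.
set W0 := \sum_(eta : config E | ~~ eta e0) w eta.
set Z := \sum_(eta : config E) w eta.
have hZ : Z = W1 + W0 by rewrite /Z (bigID (fun eta : config E => eta e0)).
have hW0 : 0 <= W0 by apply: sumr_ge0 => eta _; apply: ltW.
have hW1 : 0 <= W1 by apply: sumr_ge0 => eta _; apply: ltW.
have hlt : (1 - m) * W1 < m * W0.
  rewrite /W1 sum_tog /W0 !mulr_sumr; apply: (ltr_sum_ex (i0 := eta0)) => //; last by rewrite he0.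
  move=> eta /negbTE he; by case: (cond_weak src dst B alpha m hp hq he) => _ /(_ hmp hmp').
have hZ0 : 0 < Z.
  rewrite hZ; have : 0 < m * W0 by apply: le_lt_trans hlt; apply: mulr_ge0; rewrite ?subr_ge0.
  nra.
set t := W1 / Z.
have tZ : t * Z = W1 by rewrite /t divfK // gt_eqF.
have hmt : t < m by rewrite /t ltr_pdivrMr // hZ; nra.
have ht0 : 0 <= t by rewrite /t divr_ge0 // ltW.
exists (fun e => if e == e0 then m - t else 0); split; [|split].
- move=> e; case: eqP => _; last by rewrite lexx ler01.
  by rewrite subr_ge0 ltW //=; lra.
- by exists e0; rewrite eqxx subr_eq0 gt_eqF.
move=> A incA; rewrite /fk_measure -/w; rewrite /fk_Z -/w -/Z.
rewrite ler_pdivrMr // mulrC -lerN2 -mulNr -!sumrN.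
apply: (dom_top (e0 := e0) incA).
- move=> f; case: eqP => _; last by rewrite subr0 hm1 andbT; lra.
  by rewrite subKr ht0 /= /t ler_pdivrMr // mul1r hZ lerDl.
- move=> eta e ne he; rewrite (negbTE ne) subr0 !mulrN lerN2.
  by case: (cond_weak src dst B alpha m hp hq he) => _ /(_ hmp hmp').
- rewrite eqxx subKr !sumrN -/W1 -/W0 !mulrN lerN2; rewrite hZ in tZ; nra.
Qed.

Theorem theorem1p1 (V E : finType) (src dst : E -> V)
  (B : {set V}) (alpha : {set {set V}}) (R : realType) :
  (forall e : E, src e != dst e) ->
  connected_graph src dst ->
  partition alpha B ->
  ~ is_tree_Galpha src dst B alpha ->
  (2 <= nb_vertices_Galpha src dst B alpha)%N ->
  forall p q : R, 0 < p < 1 -> 0 < q -> q != 1 ->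
  exists eps eps' : E -> R,
    (forall e, 0 <= eps e <= 1) /\ (exists e, eps e != 0) /\
    (forall e, 0 <= eps' e <= 1) /\ (exists e, eps' e != 0) /\
    st_dom (prod_measure (fun e => Num.min p (pprime p q) + eps e))
           (fk_measure src dst B alpha p q) /\
    st_dom (fk_measure src dst B alpha p q)
           (prod_measure (fun e => Num.max p (pprime p q) - eps' e)).
Proof.
move=> _ cg _ nt n2 p q hp hq hq1.
have [e1 [eta1 he1 hk1]] := nonbridge cg nt n2.
have [e2 [eta2 he2 hk2]] := nonwired cg n2.
rewrite -[kcl _ _ _ _ (tog e1 eta1)]addn0 in hk1.
rewrite -addn1 in hk2.
have hD := D_gt0 hp hq.
have hpp : pprime p q != p.
  apply/eqP => h.
  have e1' : p * (p + q * (1 - p)) = p.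
    by rewrite -[X in X * _]h /pprime divfK // gt_eqF.
  have : (q - 1) * (p * (1 - p)) = p * (p + q * (1 - p)) - p by ring.
  rewrite e1' subrr => /eqP; rewrite mulf_eq0 subr_eq0 (negbTE hq1) /= mulf_eq0.
  by case/andP: hp => h0 h1; rewrite gt_eqF //= subr_eq0 gt_eqF.
have [hp'0 hp'1] := andP (pprime_bnd hp hq).
set m := Num.min p (pprime p q); set M := Num.max p (pprime p q).
have hmp : m <= p by rewrite /m ge_min lexx.
have hmp' : m <= pprime p q by rewrite /m ge_min lexx orbT.
have hMp : p <= M by rewrite /M le_max lexx.
have hMp' : pprime p q <= M by rewrite /M le_max lexx orbT.
have [[eps [h1 [h2 h3]]] [eps' [h1' [h2' h3']]]] :
  (exists eps : E -> R, (forall e, 0 <= eps e <= 1) /\ (exists e, eps e != 0) /\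
    st_dom (prod_measure (fun e => m + eps e)) (fk_measure src dst B alpha p q)) /\
  (exists eps : E -> R, (forall e, 0 <= eps e <= 1) /\ (exists e, eps e != 0) /\
    st_dom (fk_measure src dst B alpha p q) (prod_measure (fun e => M - eps e))).
  case: (ltP (pprime p q) p) => hlt.
    split.
      apply: (lower_ok (e0 := e1) (eta0 := eta1)) => //.
      by case: (@cond_strict0 _ _ src dst B alpha _ p q m _ _ hp hq he1 hk1) => + _; apply; lra.
    apply: (upper_ok (e0 := e2) (eta0 := eta2)) => //.
    by case: (@cond_strict1 _ _ src dst B alpha _ p q M _ _ hp hq he2 hk2) => _; apply; lra.
  have hlt' : p < pprime p q by rewrite lt_neqAle hlt andbT eq_sym.
  split.
    apply: (lower_ok (e0 := e2) (eta0 := eta2)) => //.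
    by case: (@cond_strict1 _ _ src dst B alpha _ p q m _ _ hp hq he2 hk2) => + _; apply; lra.
  apply: (upper_ok (e0 := e1) (eta0 := eta1)) => //.
  by case: (@cond_strict0 _ _ src dst B alpha _ p q M _ _ hp hq he1 hk1) => _; apply; lra.
by exists eps, eps'.
Qed.
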